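(* Let $R$ be a commutative Bezout domain of stable range 1.5, let $n\ge 2$, let $a_1,\dots,a_n\in R$ with $(a_1,\dots,a_n)=1$, let $\psi\in R$ be a fixed nonzero element, and fix an index $i$ with $2\le i\le n$. Then there exist $u_1,\dots,u_n\in R$ satisfying simultaneously: (1) $u_1a_1+\dots+u_na_n=1$; (2) $(u_1,\dots,u_i)=1$; (3) $(u_i,\psi)=1$.
   Context: A commutative Bezout domain is a commutative integral domain with $1\ne0$ in which every finitely generated ideal is principal; $(a,b,\dots)$ denotes a greatest common divisor. A commutative Bezout domain $R$ has stable range 1.5 if for all $a,b\in R$ and all $c\in R\setminus\{0\}$ with $(a,b,c)=1$ there exists $r\in R$ with $(a+br,c)=1$. *)

(* Defs.v *)
From HB Require Import structures.
From mathcomp Require Import all_boot all_order all_algebra.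
Set Implicit Arguments. Unset Strict Implicit. Unset Printing Implicit Defensive.
Import GRing.Theory.
Local Open Scope ring_scope.

Definition rdvd (R : idomainType) (d x : R) : Prop := exists c : R, x = c * d.

Definition gcd_one (R : idomainType) (s : seq R) : Prop :=
  forall d : R, (forall x, x \in s -> rdvd d x) -> d \is a GRing.unit.

Definition fg_ideal_principal (R : idomainType) (s : seq R) : Prop :=
  exists d : R,
    (forall x, x \in s -> rdvd d x) /\
    exists c : seq R, size c = size s /\ d = \sum_(k < size s) c`_k * s`_k.

Definition bezout_domain (R : idomainType) : Prop :=
  forall s : seq R, fg_ideal_principal s.

Definition stable_range_1_5 (R : idomainType) : Prop :=
  forall a b c : R, c != 0 -> gcd_one [:: a; b; c] ->
    exists r : R, gcd_one [:: a + b * r; c].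

(* Main.v *)
Require Import Defs.
From HB Require Import structures.
From mathcomp Require Import all_boot all_order all_algebra.
From mathcomp Require Import zify.
From mathcomp Require Import ring.
Import GRing.Theory.
Local Open Scope ring_scope.

Section Aux.
Variable R : idomainType.
Implicit Types x y g h k : R.

Lemma rdvd_refl g : rdvd g g. Proof. by exists 1; rewrite mul1r. Qed.
Lemma rdvd_trans g h x : rdvd g h -> rdvd h x -> rdvd g x.
Proof. by move=> [c ->] [c' ->]; exists (c' * c); rewrite mulrA. Qed.
Lemma rdvdD g x y : rdvd g x -> rdvd g y -> rdvd g (x + y).
Proof. by move=> [c ->] [c' ->]; exists (c + c'); rewrite mulrDl. Qed.
Lemma rdvdMl g x k : rdvd g x -> rdvd g (k * x).
Proof. by move=> [c ->]; exists (k * c); rewrite mulrA. Qed.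
Lemma rdvd1_unit g : rdvd g 1 -> g \is a GRing.unit.
Proof. move=> [c Hc]; apply/unitrP; exists c; split; first by rewrite -Hc. by rewrite mulrC -Hc. Qed.

Lemma gcd2I x y : (forall g, rdvd g x -> rdvd g y -> g \is a GRing.unit) -> gcd_one [:: x; y].
Proof. by move=> H g Hg; apply: H; apply: Hg; rewrite !inE eqxx ?orbT. Qed.
Lemma gcd2E x y g : gcd_one [:: x; y] -> rdvd g x -> rdvd g y -> g \is a GRing.unit.
Proof. by move=> H gx gy; apply: H => z; rewrite !inE => /orP[] /eqP ->. Qed.
Lemma gcd3I x y k : (forall g, rdvd g x -> rdvd g y -> rdvd g k -> g \is a GRing.unit) -> gcd_one [:: x; y; k].
Proof. by move=> H g Hg; apply: H; apply: Hg; rewrite !inE eqxx ?orbT. Qed.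

Lemma bez2 (hB : bezout_domain R) x y : gcd_one [:: x; y] -> exists p q, p * x + q * y = 1.
Proof.
move=> H; have [d [Hd [c [Hs Hdc]]]] := hB [:: x; y].
have Ud : d \is a GRing.unit by apply: H.
rewrite /= !big_ord_recl big_ord0 /= addr0 in Hdc.
exists (d^-1 * c`_0), (d^-1 * c`_1).
by rewrite -!mulrA -mulrDr -Hdc mulVr.
Qed.
End Aux.

Theorem theorem1p9 (R : idomainType) (hB : bezout_domain R)
  (hS : stable_range_1_5 R) (n : nat) (hn : (2 <= n)%N) (a : nat -> R)
  (ha : gcd_one [seq a j | j <- iota 1 n]) (psi : R) (hpsi : psi != 0)
  (i : nat) (hi : (2 <= i <= n)%N) :
  exists u : nat -> R,
    [/\ \sum_(1 <= j < n.+1) u j * a j = 1,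
        gcd_one [seq u j | j <- iota 1 i] &
        gcd_one [:: u i; psi]].
Proof.
have Hi2 : (2 <= i)%N by case/andP: hi.
have Hin : (i <= n)%N by case/andP: hi.
pose b j := if j == i then 0 else a j.
have [e [He [c [Hcs Hec]]]] := hB [seq b j | j <- iota 2 n.-1].
pose w j := c`_(j - 2).
have Hediv : forall j, (2 <= j <= n)%N -> rdvd e (b j).
  move=> j Hj; apply: He; apply: map_f; rewrite mem_iota; lia.
have HeS : e = \sum_(2 <= j < n.+1) w j * b j.
  rewrite Hec size_map size_iota -(add0n 2%N) big_addn.
  have -> : (n.+1 - 2 = n.-1)%N by lia.
  rewrite big_mkord; apply: eq_bigr => k _.
  by rewrite /w addnK (nth_map 0%N) ?size_iota // nth_iota // addnC.
have Hkey : forall g, rdvd g (a 1%N) -> rdvd g (a i) -> rdvd g e -> g \is a GRing.unit.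
  move=> g g1 gi ge; apply: ha => x /mapP [j]; rewrite mem_iota => Hj ->.
  have [->|j1] := eqVneq j 1%N; first done.
  have [->|ji] := eqVneq j i; first done.
  apply: rdvd_trans ge _; have := Hediv j; rewrite /b (negbTE ji); apply; lia.
have [d [Hd [pq [Hpqs Hdpq]]]] := hB [:: a 1%N; e].
rewrite /= !big_ord_recl big_ord0 /= addr0 in Hdpq.
have d1 : rdvd d (a 1%N) by apply: Hd; rewrite !inE eqxx.
have de : rdvd d e by apply: Hd; rewrite !inE eqxx orbT.
have [x [y Hxy]] : exists x y, x * d + y * a i = 1.
  apply: bez2 => //; apply: gcd2I => g gd gai; apply: Hkey => //.
    exact: rdvd_trans gd d1.
  exact: rdvd_trans gd de.
have [r Hr] : exists r, gcd_one [:: y + d * r; psi].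
  apply: hS => //; apply: gcd3I => g gy gd _; apply: rdvd1_unit.
  rewrite -Hxy; apply: rdvdD; first exact: rdvdMl.
  by rewrite mulrC; apply: rdvdMl.
have Heq3 : ((x - r * a i) * pq`_0) * a 1%N + (y + d * r) * a i
            + ((x - r * a i) * pq`_1) * e = 1.
  by rewrite -Hxy Hdpq; ring.
have final : forall al be ga, al * a 1%N + be * a i + ga * e = 1 ->
    gcd_one [:: al; be] -> gcd_one [:: be; psi] ->
  exists u : nat -> R,
    [/\ \sum_(1 <= j < n.+1) u j * a j = 1,
        gcd_one [seq u j | j <- iota 1 i] &
        gcd_one [:: u i; psi]].
  move=> al be ga Heq H1 H2.
  have i1 : (i == 1%N) = false by apply/eqP; lia.
  exists (fun j => if j == 1%N then al else if j == i then be else ga * w j).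
  split.
  - rewrite big_ltn; last lia.
    rewrite eqxx.
    rewrite (eq_big_nat _ _ (F2 := fun j => (if j == i then be * a i else 0) + ga * (w j * b j))); last first.
      move=> j /andP[Hj _]; have -> : (j == 1%N) = false by apply/eqP; lia.
      rewrite /b; case: eqVneq => [->|_]; first by rewrite mulr0 mulr0 addr0.
      by rewrite add0r mulrA.
    rewrite big_split /= -big_mkcond big_nat1_eq ifT; last lia.
    by rewrite -mulr_sumr -HeS -Heq addrA.
  - move=> g Hg; apply: (@gcd2E _ al be g H1).
      by apply: Hg; apply/mapP; exists 1%N; [rewrite mem_iota; lia | rewrite eqxx].
    by apply: Hg; apply/mapP; exists i; [rewrite mem_iota; lia | rewrite i1 eqxx].
  - by rewrite i1 eqxx.
have [Hb0|Hbn] := eqVneq (y + d * r) 0.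
  rewrite Hb0 mul0r addr0 in Heq3.
  apply: (final (((x - r * a i) * pq`_0) * (1 - a i)) 1 (((x - r * a i) * pq`_1) * (1 - a i))).
  - transitivity (((x - r * a i) * pq`_0 * a 1%N + (x - r * a i) * pq`_1 * e) * (1 - a i) + a i).
      by ring.
    by rewrite Heq3; ring.
  - by apply: gcd2I => g _ g1; apply: rdvd1_unit.
  - by apply: gcd2I => g g1 _; apply: rdvd1_unit.
have [s Hs] : exists s, gcd_one [:: (x - r * a i) * pq`_0 + e * s; y + d * r].
  apply: hS => //; apply: gcd3I => g gal ge gbe; apply: rdvd1_unit.
  rewrite -Heq3; apply: rdvdD; first apply: rdvdD.
  - by rewrite mulrC; apply: rdvdMl.
  - by rewrite mulrC; apply: rdvdMl.
  - by apply: rdvdMl.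
apply: (final _ _ ((x - r * a i) * pq`_1 - s * a 1%N) _ Hs Hr).
by rewrite -[RHS]Heq3; ring.
Qed.
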